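(* Let $r\ge 2$ be an integer, let $d_0,\dots,d_{r-1}>0$ with $\sum_{l=0}^{r-1} d_l=1$, let $p>0$ and $C_\alpha>0$ be constants, and let $n_1,n_2,m$ be integers with $n_2>n_1\ge 1$ and $m>n_1$. Suppose that, as $\Delta x\to 0^+$, quantities $\tau=\tau(\Delta x)\ge 0$ and $\beta_k=\beta_k(\Delta x)>0$ ($k=0,\dots,r-1$) satisfy $\tau=O(\Delta x^m)$ and $$\beta_k=\sum_{l'=n_1}^{n_2-1} a_{l'}\,\Delta x^{l'}+b_k\,\Delta x^{n_2}+O(\Delta x^{n_2+1}),\qquad k=0,\dots,r-1,$$ where the coefficients $a_{n_1},\dots,a_{n_2-1}$ are the same for all $k$, $a_{n_1}\neq 0$, and the constants $b_k$ may differ across $k$. Define $\alpha_k=d_k\bigl(1+C_\alpha(\tau/\beta_k)^p\bigr)$ (with the same constant $C_\alpha$ for every $k$) and $\omega_k=\alpha_k/\sum_{l=0}^{r-1}\alpha_l$. Then for every $k$, $$\omega_k=d_k\Bigl(1+O\bigl(\Delta x^{p(m-n_1)}\bigr)\cdot O\bigl(\Delta x^{n_2-n_1}\bigr)\Bigr)=d_k\Bigl(1+O\bigl(\Delta x^{p(m-n_1)+n_2-n_1}\bigr)\Bigr)\quad\text{as }\Delta x\to 0^+.$$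
   Context: In a WENO-Z type scheme, $d_k$ are linear weights, $\beta_k$ are local smoothness indicators, $\tau$ is a global smoothness indicator, $\alpha_k$ are non-normalized nonlinear weights and $\omega_k$ are normalized nonlinear weights. All $O(\cdot)$ statements refer to the limit $\Delta x\to 0^+$ with all other data fixed. *)

(* Defs.v *)
From Stdlib Require Import Reals Lra.
Open Scope R_scope.

Definition bigO0 (f g : R -> R) : Prop :=
  exists C delta : R, 0 < delta /\
    forall h : R, 0 < h < delta -> Rabs (f h) <= C * Rabs (g h).

(* Sum_{l=0}^{r-1} F l  (r >= 1). *)
Definition sum_lt (r : nat) (F : nat -> R) : R := sum_f_R0 F (r - 1).

(* Real power x^p for x >= 0, p > 0, with the convention 0^p = 0
   (Stdlib's Rpower 0 p is exp (p * ln 0) = 1, which is wrong here). *)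
Definition rpow (x p : R) : R := if Rle_dec x 0 then 0 else Rpower x p.

Definition alphaZ (d : nat -> R) (Ca p : R) (tau : R -> R) (beta : nat -> R -> R)
    (k : nat) (h : R) : R :=
  d k * (1 + Ca * rpow (tau h / beta k h) p).

Definition omegaZ (r : nat) (d : nat -> R) (Ca p : R) (tau : R -> R)
    (beta : nat -> R -> R) (k : nat) (h : R) : R :=
  alphaZ d Ca p tau beta k h / sum_lt r (fun l => alphaZ d Ca p tau beta l h).

(* Main.v *)
Require Import Defs.
From Stdlib Require Import Reals Lra Lia.
Open Scope R_scope.

Lemma ln_le_m1 x : 0 < x -> ln x <= x - 1.
Proof. intros Hx. generalize (exp_ineq1_le (ln x)). rewrite exp_ln; lra. Qed.

Lemma Rpower_pos x y : 0 < Rpower x y.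
Proof. unfold Rpower. apply exp_pos. Qed.

Lemma pow_half A B p : 0 < p -> 0 < B <= A ->
  Rabs (Rpower A p - Rpower B p) <= p * Rpower A p * (A/B - 1).
Proof.
  intros Hp [HB HBA].
  assert (HA : 0 < A) by lra.
  assert (Hm : Rpower B p <= Rpower A p) by (apply Rle_Rpower_l; lra).
  rewrite Rabs_right by lra.
  assert (Hdec : Rpower B p = Rpower A p * Rpower (B/A) p).
  { rewrite Rpower_mult_distr; [|lra| apply Rdiv_lt_0_compat; lra].
    f_equal. field. lra. }
  assert (Hln : ln (B/A) >= 1 - A/B).
  { replace (B/A) with (/ (A/B)) by (field; lra).
    rewrite ln_Rinv by (apply Rdiv_lt_0_compat; lra).
    generalize (ln_le_m1 (A/B) ltac:(apply Rdiv_lt_0_compat; lra)). lra. }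
  assert (Hr : Rpower (B/A) p >= 1 - p * (A/B - 1)).
  { unfold Rpower. generalize (exp_ineq1_le (p * ln (B/A))).
    assert (p * ln (B/A) >= p * (1 - A/B)) by (apply Rmult_ge_compat_l; lra).
    nra. }
  rewrite Hdec. generalize (Rpower_pos A p). nra.
Qed.

Lemma pow_diff A B p : 0 < p -> 0 < A -> 0 < B ->
  Rabs (Rpower A p - Rpower B p) <=
  p * (Rpower A p + Rpower B p) * (Rabs (A/B - 1) + Rabs (B/A - 1)).
Proof.
  intros Hp HA HB.
  generalize (Rpower_pos A p) (Rpower_pos B p) (Rabs_pos (A/B-1)) (Rabs_pos (B/A-1)).
  intros h1 h2 h3 h4.
  assert (E : p * (Rpower A p + Rpower B p) * (Rabs (A/B - 1) + Rabs (B/A - 1))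
   = p * Rpower A p * Rabs (A/B-1) + p * Rpower B p * Rabs (B/A-1)
     + p * Rpower A p * Rabs (B/A-1) + p * Rpower B p * Rabs (A/B-1)) by ring.
  rewrite E.
  assert (0 <= p * Rpower A p * Rabs (B/A-1)) by (apply Rmult_le_pos; nra).
  assert (0 <= p * Rpower B p * Rabs (A/B-1)) by (apply Rmult_le_pos; nra).
  assert (0 <= p * Rpower A p * Rabs (A/B-1)) by (apply Rmult_le_pos; nra).
  assert (0 <= p * Rpower B p * Rabs (B/A-1)) by (apply Rmult_le_pos; nra).
  destruct (Rle_dec B A).
  - generalize (pow_half A B p Hp ltac:(lra)). intros Hh.
    assert (p * Rpower A p * (A/B-1) <= p * Rpower A p * Rabs (A/B-1))
      by (apply Rmult_le_compat_l; [nra| apply Rle_abs]). lra.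
  - generalize (pow_half B A p Hp ltac:(lra)). intros Hh.
    rewrite Rabs_minus_sym in Hh.
    assert (p * Rpower B p * (B/A-1) <= p * Rpower B p * Rabs (B/A-1))
      by (apply Rmult_le_compat_l; [nra| apply Rle_abs]). lra.
Qed.
Lemma bigO_unif n (f : nat -> R -> R) g :
  (forall l, (l < n)%nat -> bigO0 (f l) g) ->
  exists C delta, 0 < delta /\ forall l h, (l < n)%nat -> 0 < h < delta ->
    Rabs (f l h) <= C * Rabs (g h).
Proof.
  induction n as [|n IH]; intros H.
  - exists 0, 1. split; [lra|]. intros; lia.
  - destruct IH as [C1 [d1 [Hd1 H1]]]. { intros l Hl. apply H. lia. }
    destruct (H n ltac:(lia)) as [C2 [d2 [Hd2 H2]]].
    exists (Rmax C1 C2), (Rmin d1 d2). split. { apply Rmin_pos; auto. }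
    intros l h Hl Hh.
    assert (h < d1) by (generalize (Rmin_l d1 d2); lra).
    assert (h < d2) by (generalize (Rmin_r d1 d2); lra).
    generalize (Rabs_pos (g h)) (Rmax_l C1 C2) (Rmax_r C1 C2). intros.
    destruct (Nat.eq_dec l n) as [->|Hne].
    + generalize (H2 h ltac:(lra)). nra.
    + generalize (H1 l h ltac:(lia) ltac:(lra)). nra.
Qed.

Lemma poly_tail (a : nat -> R) n1 N h : 0 < h <= 1 ->
  Rabs (sum_f_R0 (fun x => a (x + n1)%nat * h ^ (x + n1)) N - a n1 * h ^ n1)
  <= sum_f_R0 (fun i => Rabs (a (i + n1)%nat)) N * h ^ (n1 + 1).
Proof.
  intros Hh. assert (Hp : 0 < h ^ (n1+1)) by (apply pow_lt; lra).
  induction N as [|N IH].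
  - simpl. unfold Rminus; rewrite Rplus_opp_r, Rabs_R0.
    generalize (Rabs_pos (a n1)). nra.
  - cbn [sum_f_R0].
    replace (sum_f_R0 (fun x => a (x + n1)%nat * h ^ (x + n1)) N +
      a (S N + n1)%nat * h ^ (S N + n1) - a n1 * h ^ n1) with
     ((sum_f_R0 (fun x => a (x + n1)%nat * h ^ (x + n1)) N - a n1 * h ^ n1)
      + a (S N + n1)%nat * h ^ (S N + n1)) by ring.
    eapply Rle_trans; [apply Rabs_triang|].
    rewrite Rmult_plus_distr_r. apply Rplus_le_compat; [exact IH|].
    rewrite Rabs_mult. apply Rmult_le_compat_l; [apply Rabs_pos|].
    rewrite Rabs_right by (apply Rle_ge, pow_le; lra).
    replace (S N + n1)%nat with ((n1 + 1) + N)%nat by lia.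
    rewrite pow_add. 
    assert (h ^ N <= 1) by (rewrite <- (pow1 N); apply pow_incr; lra).
    nra.
Qed.

Lemma ratio_bound u v E : 0 < v -> Rabs (u - v) <= E * v -> Rabs (u / v - 1) <= E.
Proof.
  intros Hv H.
  replace (u / v - 1) with ((u - v) * / v) by (field; lra).
  rewrite Rabs_mult, Rabs_inv, (Rabs_right v) by lra.
  apply (Rmult_le_reg_r v); [lra|].
  rewrite Rmult_assoc, Rinv_l by lra. lra.
Qed.

Lemma div_le u v X : 0 < v -> u <= X * v -> u / v <= X.
Proof.
  intros Hv H. unfold Rdiv.
  replace X with ((X * v) * / v) by (field; lra).
  apply Rmult_le_compat_r; [left; apply Rinv_0_lt_compat; lra | lra].
Qed.

Lemma Rmin_lt3 a b h : 0 < h < Rmin a b -> 0 < h < a /\ 0 < h < b.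
Proof. intros. generalize (Rmin_l a b) (Rmin_r a b). lra. Qed.

Theorem lemma3p1
  (r : nat) (d : nat -> R) (p Ca : R) (n1 n2 m : nat)
  (tau : R -> R) (beta : nat -> R -> R) (a b : nat -> R) :
  (2 <= r)%nat ->
  (forall k, (k < r)%nat -> 0 < d k) ->
  sum_lt r d = 1 ->
  0 < p -> 0 < Ca ->
  (1 <= n1)%nat -> (n1 < n2)%nat -> (n1 < m)%nat ->
  (exists delta0, 0 < delta0 /\ forall h, 0 < h < delta0 ->
      0 <= tau h /\ forall k, (k < r)%nat -> 0 < beta k h) ->
  bigO0 tau (fun h => h ^ m) ->
  a n1 <> 0 ->
  (forall k, (k < r)%nat ->
     bigO0 (fun h => beta k h
                     - sum_f n1 (n2 - 1) (fun l => a l * h ^ l)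
                     - b k * h ^ n2)
           (fun h => h ^ (n2 + 1))) ->
  forall k, (k < r)%nat ->
    exists e : R -> R,
      bigO0 e (fun h => Rpower h (p * INR (m - n1) + INR (n2 - n1))) /\
      (exists delta1, 0 < delta1 /\ forall h, 0 < h < delta1 ->
         omegaZ r d Ca p tau beta k h = d k * (1 + e h)).
Proof.
  intros Hr Hd Hsum Hp HCa Hn1 Hn12 Hm [d0 [Hd0 Hpos]] [M [dt [Hdt Htau]]] Ha Hbeta k Hk.
  set (P := fun h => sum_f n1 (n2 - 1) (fun l => a l * h ^ l)).
  assert (H1 : forall l, (l < r)%nat -> bigO0 (fun h => beta l h - P h) (fun h => h ^ n2)).
  { intros l Hl. destruct (Hbeta l Hl) as [C [dl [Hdl HC]]].
    exists (Rabs C + Rabs (b l)), (Rmin dl 1). split; [apply Rmin_pos; lra|].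
    intros h Hh. apply Rmin_lt3 in Hh. destruct Hh as [Hh1 Hh2].
    specialize (HC h Hh1). simpl in HC.
    assert (Hpn : 0 < h ^ n2) by (apply pow_lt; lra).
    rewrite (Rabs_right (h ^ n2)) by lra.
    rewrite (Rabs_right (h ^ (n2+1))) in HC by (apply Rle_ge, pow_le; lra).
    rewrite pow_add in HC. simpl in HC.
    replace (beta l h - P h) with ((beta l h - P h - b l * h ^ n2) + b l * h ^ n2) by ring.
    eapply Rle_trans; [apply Rabs_triang|]. rewrite Rabs_mult, (Rabs_right (h ^ n2)) by lra.
    unfold P at 1.
    assert (C * (h ^ n2 * (h * 1)) <= Rabs C * h ^ n2).
    { generalize (Rle_abs C) (Rabs_pos C). intros.
      assert (0 <= h ^ n2 * h) by nra.
      assert (C * (h ^ n2 * h) <= Rabs C * (h ^ n2 * h)) by (apply Rmult_le_compat_r; lra).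
      assert (Rabs C * (h ^ n2 * h) <= Rabs C * h ^ n2) by (apply Rmult_le_compat_l; nra).
      rewrite Rmult_1_r. lra. }
    nra. }
  destruct (bigO_unif r _ _ H1) as [K [dK [HdK HK]]].
  set (T := sum_f_R0 (fun i => Rabs (a (i + n1)%nat)) (n2 - 1 - n1)).
  assert (HT : 0 <= T) by (apply cond_pos_sum; intros; apply Rabs_pos).
  set (Q := Rabs K + T + 1).
  assert (HQp : 0 < Q) by (generalize (Rabs_pos K); unfold Q; lra).
  assert (HQ : forall l h, (l < r)%nat -> 0 < h < Rmin dK 1 ->
             Rabs (beta l h - a n1 * h ^ n1) <= Q * h ^ (n1 + 1)).
  { intros l h Hl Hh. apply Rmin_lt3 in Hh. destruct Hh as [Hh1 Hh2].
    specialize (HK l h Hl Hh1). simpl in HK.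
    assert (Hpt := poly_tail a n1 (n2 - 1 - n1) h ltac:(lra)).
    fold T in Hpt.
    assert (HPe : P h = sum_f_R0 (fun x => a (x + n1)%nat * h ^ (x + n1)) (n2 - 1 - n1)) by reflexivity.
    rewrite <- HPe in Hpt.
    assert (Hpn : 0 < h ^ (n1+1)) by (apply pow_lt; lra).
    assert (Hle : h ^ n2 <= h ^ (n1 + 1)).
    { replace n2 with ((n1 + 1) + (n2 - (n1 + 1)))%nat by lia. rewrite pow_add.
      assert (h ^ (n2 - (n1 + 1)) <= 1) by (rewrite <- (pow1 (n2 - (n1+1))); apply pow_incr; lra).
      assert (0 <= h ^ (n2 - (n1 + 1))) by (apply pow_le; lra). nra. }
    rewrite (Rabs_right (h ^ n2)) in HK by (apply Rle_ge, pow_le; lra).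
    replace (beta l h - a n1 * h ^ n1) with ((beta l h - P h) + (P h - a n1 * h ^ n1)) by ring.
    eapply Rle_trans; [apply Rabs_triang|].
    assert (K * h ^ n2 <= Rabs K * h ^ (n1 + 1)).
    { generalize (Rle_abs K) (Rabs_pos K) (pow_le h n2 ltac:(lra)). intros. nra. }
    unfold Q. nra. }
  assert (Hr0 : (0 < r)%nat) by lia.
  assert (Hapos : 0 < a n1).
  { destruct (Rlt_le_dec 0 (a n1)) as [|Hneg]; [assumption|].
    assert (Hneg' : a n1 < 0) by (destruct Hneg; [assumption| exfalso; apply Ha; assumption]).
    set (h := Rmin (Rmin d0 (Rmin dK 1)) (- a n1 / Q) / 2).
    assert (Hq : 0 < - a n1 / Q) by (apply Rdiv_lt_0_compat; lra).
    assert (Hm1 : 0 < Rmin (Rmin d0 (Rmin dK 1)) (- a n1 / Q))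
      by (repeat apply Rmin_pos; lra).
    assert (Hh0 : 0 < h) by (unfold h; lra).
    assert (Hhm : 0 < h < Rmin (Rmin d0 (Rmin dK 1)) (- a n1 / Q)) by (unfold h; lra).
    apply Rmin_lt3 in Hhm as [Hha [_ Hhq]].
    apply Rmin_lt3 in Hha as [Hhd0 Hh2].
    destruct (Hpos h Hhd0) as [_ Hb].
    specialize (Hb 0%nat Hr0).
    specialize (HQ 0%nat h Hr0 Hh2).
    assert (Qh : Q * h < - a n1).
    { apply (Rmult_lt_compat_l Q) in Hhq; [|lra].
      replace (Q * (- a n1 / Q)) with (- a n1) in Hhq by (field; lra). lra. }
    assert (Hpn : 0 < h ^ n1) by (apply pow_lt; lra).
    rewrite pow_add in HQ. simpl in HQ.
    generalize (Rle_abs (beta 0%nat h - a n1 * h ^ n1)). intros.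
    assert (h ^ n1 * (Q * h) < h ^ n1 * (- a n1)) by (apply Rmult_lt_compat_l; lra).
    nra. }
  set (c := a n1 / 2).
  assert (Hc : 0 < c) by (unfold c; lra).
  set (h1 := Rmin (Rmin d0 (Rmin dK 1)) (Rmin dt (a n1 / (2 * Q)))).
  assert (Hh1 : 0 < h1).
  { unfold h1. assert (0 < a n1 / (2 * Q)) by (apply Rdiv_lt_0_compat; lra).
    repeat apply Rmin_pos; lra. }
  assert (Hsmall : forall h, 0 < h < h1 ->
     0 < h < d0 /\ 0 < h < Rmin dK 1 /\ 0 < h < dK /\ 0 < h < 1 /\ 0 < h < dt /\ Q * h <= c).
  { intros h Hh. unfold h1 in Hh.
    apply Rmin_lt3 in Hh as [Hh Hh'].
    apply Rmin_lt3 in Hh as [Hha Hhb].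
    apply Rmin_lt3 in Hh' as [Hhc Hhd].
    pose proof Hhb as Hhb'. apply Rmin_lt3 in Hhb' as [Hhe Hhf].
    repeat split; try lra.
    destruct Hhd as [_ Hhd].
    apply (Rmult_lt_compat_l Q) in Hhd; [|lra].
    replace (Q * (a n1 / (2 * Q))) with c in Hhd by (unfold c; field; lra). lra. }
  assert (Hlow : forall l h, (l < r)%nat -> 0 < h < h1 -> c * h ^ n1 <= beta l h).
  { intros l h Hl Hh. destruct (Hsmall h Hh) as (_ & Hh2 & _ & Hh4 & _ & Hqc).
    specialize (HQ l h Hl Hh2). rewrite pow_add in HQ. simpl in HQ.
    generalize (Rle_abs (- (beta l h - a n1 * h ^ n1))). rewrite Rabs_Ropp. intros.
    assert (Hpn : 0 < h ^ n1) by (apply pow_lt; lra).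
    assert (h ^ n1 * (Q * h) <= h ^ n1 * c) by (apply Rmult_le_compat_l; lra).
    unfold c in *. nra. }
  set (M' := Rmax M 1).
  assert (HM' : 0 < M') by (generalize (Rmax_r M 1); unfold M'; lra).
  assert (Htau' : forall h, 0 < h < h1 -> 0 <= tau h <= M' * h ^ m).
  { intros h Hh. destruct (Hsmall h Hh) as (Hh0 & _ & _ & _ & Hht & _).
    destruct (Hpos h Hh0) as [Ht _]. specialize (Htau h Hht).
    rewrite Rabs_right in Htau by lra. rewrite (Rabs_right (h ^ m)) in Htau by (apply Rle_ge, pow_le; lra).
    generalize (Rmax_l M 1) (pow_le h m ltac:(lra)). intros. unfold M'. nra. }
  set (G := Rpower (M' / c) p).
  assert (HG : 0 < G) by apply Rpower_pos.
  set (W := 8 * p * G * Rabs K / c).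
  assert (HW : 0 <= W).
  { unfold W. apply Rmult_le_pos; [|left; apply Rinv_0_lt_compat; lra].
    generalize (Rabs_pos K). intros. apply Rmult_le_pos; [|lra]. nra. }
  set (y := fun j h => rpow (tau h / beta j h) p).
  set (P1 := fun h => Rpower h (p * INR (m - n1))).
  assert (Hy : forall l h, (l < r)%nat -> 0 < h < h1 ->
     Rabs (y k h - y l h) <= W * (P1 h * h ^ (n2 - n1))).
  { intros l h Hl Hh.
    assert (HP1 : 0 < P1 h) by apply Rpower_pos.
    assert (Hpw : 0 < h ^ (n2 - n1)) by (apply pow_lt; lra).
    assert (Hbd : 0 <= W * (P1 h * h ^ (n2 - n1))).
    { apply Rmult_le_pos; [lra|]. nra. }
    destruct (Htau' h Hh) as [Ht0 Ht].
    destruct (Hsmall h Hh) as (Hh0 & _ & HhK & Hh1' & _ & _).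
    assert (Hbk := Hlow k h Hk Hh). assert (Hbl := Hlow l h Hl Hh).
    assert (Hpn : 0 < h ^ n1) by (apply pow_lt; lra).
    assert (Hbk0 : 0 < beta k h) by nra. assert (Hbl0 : 0 < beta l h) by nra.
    destruct Ht0 as [Htp | Ht0].
    2:{ unfold y. rewrite <- Ht0. unfold Rdiv. rewrite !Rmult_0_l.
        unfold rpow. destruct (Rle_dec 0 0); [|lra]. rewrite Rminus_0_r, Rabs_R0. lra. }
    assert (HA : 0 < tau h / beta k h) by (apply Rdiv_lt_0_compat; lra).
    assert (HB : 0 < tau h / beta l h) by (apply Rdiv_lt_0_compat; lra).
    assert (Eyk : y k h = Rpower (tau h / beta k h) p).
    { unfold y, rpow. destruct (Rle_dec (tau h / beta k h) 0); [lra|reflexivity]. }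
    assert (Eyl : y l h = Rpower (tau h / beta l h) p).
    { unfold y, rpow. destruct (Rle_dec (tau h / beta l h) 0); [lra|reflexivity]. }
    rewrite Eyk, Eyl.
    eapply Rle_trans; [apply pow_diff; assumption|].
    assert (Hhm : 0 < h ^ (m - n1)) by (apply pow_lt; lra).
    assert (HPow : forall j, (j < r)%nat -> Rpower (tau h / beta j h) p <= G * P1 h).
    { intros j Hj. assert (Hbj := Hlow j h Hj Hh).
      assert (Hbj0 : 0 < beta j h) by nra.
      assert (Hx : tau h / beta j h <= (M' / c) * h ^ (m - n1)).
      { apply div_le; [lra|].
        assert (Em : h ^ m = h ^ (m - n1) * h ^ n1) by (rewrite <- pow_add; f_equal; lia).
        assert (M' / c * h ^ (m - n1) * (c * h ^ n1) = M' * h ^ m) by (rewrite Em; field; lra).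
        assert (0 <= M' / c * h ^ (m - n1)) by (apply Rmult_le_pos; [left; apply Rdiv_lt_0_compat|]; lra).
        assert (M' / c * h ^ (m - n1) * (c * h ^ n1) <= M' / c * h ^ (m - n1) * beta j h)
          by (apply Rmult_le_compat_l; lra).
        lra. }
      eapply Rle_trans; [apply Rle_Rpower_l; [lra| split; [apply Rdiv_lt_0_compat; lra| exact Hx]]|].
      rewrite <- Rpower_mult_distr; [|apply Rdiv_lt_0_compat; lra| lra].
      unfold G, P1. rewrite <- (Rpower_pow (m - n1) h) by lra.
      rewrite Rpower_mult, (Rmult_comm (INR (m - n1)) p). lra. }
    assert (Hdiff : Rabs (beta l h - beta k h) <= 2 * Rabs K * h ^ n2).
    { assert (E1 := HK l h Hl HhK). assert (E2 := HK k h Hk HhK).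
      rewrite (Rabs_right (h ^ n2)) in E1, E2 by (apply Rle_ge, pow_le; lra).
      replace (beta l h - beta k h) with ((beta l h - P h) - (beta k h - P h)) by ring.
      eapply Rle_trans; [apply Rabs_triang|]. rewrite Rabs_Ropp.
      generalize (Rle_abs K) (pow_le h n2 ltac:(lra)). intros. nra. }
    set (E := 2 * Rabs K / c * h ^ (n2 - n1)).
    assert (HE : forall u v, (u = l /\ v = k \/ u = k /\ v = l) ->
       Rabs (beta u h / beta v h - 1) <= E).
    { intros u v Huv. 
      assert (Hv : (v < r)%nat) by (destruct Huv as [[_ ->]|[_ ->]]; assumption).
      assert (Hbv := Hlow v h Hv Hh).
      assert (Hbv0 : 0 < beta v h) by nra.
      apply ratio_bound; [lra|].
      assert (Hd' : Rabs (beta u h - beta v h) <= 2 * Rabs K * h ^ n2).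
      { destruct Huv as [[-> ->]|[-> ->]]; [exact Hdiff| rewrite Rabs_minus_sym; exact Hdiff]. }
      assert (En : h ^ n2 = h ^ (n2 - n1) * h ^ n1) by (rewrite <- pow_add; f_equal; lia).
      assert (HE0 : 0 <= E).
      { unfold E. apply Rmult_le_pos; [|left; exact Hpw].
        apply Rmult_le_pos; [generalize (Rabs_pos K); lra| left; apply Rinv_0_lt_compat; lra]. }
      assert (E * (c * h ^ n1) = 2 * Rabs K * h ^ n2) by (unfold E; rewrite En; field; lra).
      assert (E * (c * h ^ n1) <= E * beta v h) by (apply Rmult_le_compat_l; lra).
      lra. }
    replace (tau h / beta k h / (tau h / beta l h)) with (beta l h / beta k h) by (field; lra).
    replace (tau h / beta l h / (tau h / beta k h)) with (beta k h / beta l h) by (field; lra).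
    assert (R1 := HE l k ltac:(left; split; reflexivity)).
    assert (R2 := HE k l ltac:(right; split; reflexivity)).
    assert (Pk := HPow k Hk). assert (Pl := HPow l Hl).
    assert (Hs1 : Rpower (tau h / beta k h) p + Rpower (tau h / beta l h) p <= 2 * (G * P1 h)) by lra.
    assert (Hs2 : Rabs (beta l h / beta k h - 1) + Rabs (beta k h / beta l h - 1) <= 2 * E) by lra.
    assert (W * (P1 h * h ^ (n2 - n1)) = p * (2 * (G * P1 h)) * (2 * E)) by (unfold W, E; field; lra).
    rewrite H.
    apply Rmult_le_compat.
    - generalize (Rpower_pos (tau h / beta k h) p) (Rpower_pos (tau h / beta l h) p). intros. nra.
    - generalize (Rabs_pos (beta l h / beta k h - 1)) (Rabs_pos (beta k h / beta l h - 1)). lra.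
    - apply Rmult_le_compat_l; lra.
    - exact Hs2. }
  assert (Hdk : 0 < d k) by (apply Hd; exact Hk).
  exists (fun h => omegaZ r d Ca p tau beta k h / d k - 1). split.
  2:{ exists 1. split; [lra|]. intros h _. field. lra. }
  exists (Ca * W), h1. split; [exact Hh1|]. intros h Hh.
  assert (Hh0 : 0 < h) by lra.
  assert (Eg : Rpower h (p * INR (m - n1) + INR (n2 - n1)) = P1 h * h ^ (n2 - n1)).
  { unfold P1. rewrite Rpower_plus, Rpower_pow by lra. reflexivity. }
  rewrite Eg.
  assert (HP1 : 0 < P1 h) by apply Rpower_pos.
  assert (Hpw : 0 < h ^ (n2 - n1)) by (apply pow_lt; lra).
  rewrite (Rabs_right (P1 h * h ^ (n2 - n1))) by nra.
  assert (Hy0 : forall j, 0 <= y j h).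
  { intros j. unfold y, rpow. destruct (Rle_dec _ 0); [lra| left; apply Rpower_pos]. }
  set (N := (r - 1)%nat).
  assert (HN : forall l, (l <= N)%nat -> (l < r)%nat) by (intros; unfold N in *; lia).
  set (Ssum := sum_lt r (fun l => alphaZ d Ca p tau beta l h)).
  assert (ES : Ssum = 1 + Ca * sum_f_R0 (fun l => d l * y l h) N).
  { unfold Ssum, sum_lt. fold N. unfold sum_lt in Hsum. fold N in Hsum. rewrite <- Hsum.
    rewrite scal_sum, <- plus_sum. apply sum_eq. intros i _. unfold alphaZ, y. ring. }
  assert (HS1 : 0 <= sum_f_R0 (fun l => d l * y l h) N).
  { rewrite <- (Rmult_0_l (INR (S N))), <- sum_cte. apply sum_Rle.
    intros l Hl. apply Rmult_le_pos; [left; apply Hd, HN, Hl| apply Hy0]. }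
  set (g := P1 h * h ^ (n2 - n1)).
  set (D := sum_f_R0 (fun l => d l * (y k h - y l h)) N).
  assert (ED : D = y k h - sum_f_R0 (fun l => d l * y l h) N).
  { unfold D. unfold sum_lt in Hsum. fold N in Hsum.
    assert (Hc1 : sum_f_R0 (fun l => d l * y k h) N = y k h).
    { rewrite <- scal_sum, Hsum. ring. }
    transitivity (sum_f_R0 (fun l => d l * y k h) N - sum_f_R0 (fun l => d l * y l h) N).
    - rewrite <- minus_sum. apply sum_eq. intros. ring.
    - rewrite Hc1. reflexivity. }
  assert (Hsum1 : sum_f_R0 d N = 1) by exact Hsum.
  assert (HD : Rabs D <= W * g).
  { eapply Rle_trans; [apply sum_f_R0_triangle|].
    eapply Rle_trans with (sum_f_R0 (fun l => d l * (W * g)) N).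
    - apply sum_Rle. intros l Hl. rewrite Rabs_mult, (Rabs_right (d l)).
      + apply Rmult_le_compat_l; [left; apply Hd, HN, Hl|]. apply Hy; [apply HN, Hl| exact Hh].
      + left; apply Hd, HN, Hl.
    - rewrite <- scal_sum, Hsum1. lra. }
  assert (Ee : omegaZ r d Ca p tau beta k h / d k - 1 = Ca * D / Ssum).
  { unfold omegaZ. fold Ssum. rewrite ED, ES. unfold alphaZ. fold (y k h).
    field. split; [nra|lra]. }
  rewrite Ee.
  assert (HS : 1 <= Ssum) by (rewrite ES; nra).
  unfold Rdiv. rewrite Rabs_mult, Rabs_mult, Rabs_inv, (Rabs_right Ca), (Rabs_right Ssum) by lra.
  assert (0 < / Ssum <= 1).
  { split; [apply Rinv_0_lt_compat; lra|]. rewrite <- Rinv_1. apply Rinv_le_contravar; lra. }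
  assert (Hg0 : 0 <= W * g) by (unfold g; apply Rmult_le_pos; [lra|]; apply Rmult_le_pos; lra).
  assert (Ca * Rabs D <= Ca * (W * g)) by (apply Rmult_le_compat_l; lra).
  generalize (Rabs_pos D). intros. 
  assert (Ca * Rabs D * / Ssum <= Ca * Rabs D * 1) by (apply Rmult_le_compat_l; nra).
  lra.
Qed.
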